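(* Let $P$ and $Q$ be probability distributions on a nonempty set $\mathcal{X}\subseteq\mathbb{R}^d$, let $c\in(0,1)$, and let $h:\mathcal{X}\to\mathbb{R}$ be a fixed measurable function with $\mathbb{E}_{X\sim P}[h(X)^2]<\infty$, $\mathbb{E}_{Y\sim Q}[h(Y)^2]<\infty$ and $\sigma_c(h)>0$. For $\gamma,\nu\in\mathbb{R}$ consider the linearly transformed function $\gamma h+\nu$, and let $(\gamma^*,\nu^* )$ be the minimum of the quadratic function $(\gamma,\nu)\mapsto L_{P,Q,c}(\gamma h+\nu)$. Then $$L_{P,Q,c}(\gamma^* h+\nu^* )=\frac{c(1-c)}{1+\mathrm{SNR}(h)^2}.$$
   Context: For a measurable $h:\mathcal{X}\to\mathbb{R}$ with finite second moments under $P$ and $Q$, define: the mean discrepancy $\tau(P,Q\mid h)=\mathbb{E}_{X\sim P}[h(X)]-\mathbb{E}_{Y\sim Q}[h(Y)]$; the variance term $\sigma_c^2(h)=\dfrac{(1-c)\,\mathrm{Var}_{X\sim P}[h(X)]+c\,\mathrm{Var}_{Y\sim Q}[h(Y)]}{c(1-c)}$ with $\sigma_c(h)\ge 0$ its square root; the signal-to-noise ratio $\mathrm{SNR}(h)=\tau(P,Q\mid h)/\sigma_c(h)$ (defined when $\sigma_c(h)>0$); and the weighted squared loss $L_{P,Q,c}(h)=(1-c)\,\mathbb{E}_{X\sim P}[(1-h(X))^2]+c\,\mathbb{E}_{Y\sim Q}[h(Y)^2]$. *)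

(* Defs.v *)
From HB Require Import structures.
From mathcomp Require Import all_boot all_order all_algebra.
From mathcomp Require Import all_classical all_reals all_analysis.
Set Implicit Arguments. Unset Strict Implicit. Unset Printing Implicit Defensive.
Import Order.TTheory GRing.Theory Num.Theory.
Local Open Scope ring_scope.

Section Defs.
Context (d : measure_display) (T : measurableType d) (R : realType).

(* E_{X ~ P}[f(X)] as a real number (meaningful when f is P-integrable). *)
Definition mean (P : probability T R) (f : T -> R) : R :=
  fine (\int[P]_x (f x)%:E).

Definition var (P : probability T R) (f : T -> R) : R :=
  mean P (fun x => (f x - mean P f) ^+ 2).

Definition tau (P Q : probability T R) (h : T -> R) : R :=
  mean P h - mean Q h.

Definition sigma2 (P Q : probability T R) (c : R) (h : T -> R) : R :=
  ((1 - c) * var P h + c * var Q h) / (c * (1 - c)).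

Definition sigma (P Q : probability T R) (c : R) (h : T -> R) : R :=
  Num.sqrt (sigma2 P Q c h).

Definition SNR (P Q : probability T R) (c : R) (h : T -> R) : R :=
  tau P Q h / sigma P Q c h.

Definition Lloss (P Q : probability T R) (c : R) (h : T -> R) : R :=
  (1 - c) * mean P (fun x => (1 - h x) ^+ 2) + c * mean Q (fun x => h x ^+ 2).

End Defs.

(* Main.v *)
Require Import Defs.
From HB Require Import structures.
From mathcomp Require Import all_boot all_order all_algebra.
From mathcomp Require Import all_classical all_reals all_analysis.
From mathcomp Require Import ring lra measurable_realfun.
Import Order.TTheory GRing.Theory Num.Theory.
Local Open Scope ring_scope.

Section H.
Context (R : realType) (d : measure_display) (T : measurableType d)
  (P : probability T R) (h : T -> R).
Hypothesis mh : measurable_fun setT h.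
Hypothesis ih2 : P.-integrable setT (fun x => ((h x) ^+ 2)%:E).

Lemma meanE f : mean P f = Rintegral P setT f.
Proof. by []. Qed.

Lemma int1 : P.-integrable setT (EFin \o h).
Proof.
apply: (@le_integrable _ _ _ P setT measurableT (EFin \o h) (EFin \o (fun x => 1 + h x ^+ 2))).
- exact/measurable_EFinP.
- move=> x _ /=; rewrite lee_fin.
  rewrite [X in _ <= X]ger0_norm ?addr_ge0 ?sqr_ge0 //.
  have : `|h x| ^+ 2 = h x ^+ 2 by rewrite real_normK // num_real.
  have := normr_ge0 (h x). nra.
- have -> : (EFin \o (fun x => 1 + h x ^+ 2)) = (EFin \o cst 1) \+ (fun x => ((h x) ^+ 2)%:E).
    by apply/funext => x /=; rewrite EFinD.
  apply: integrableD => //; exact: finite_measure_integrable_cst.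
Qed.

Lemma mean_quad (al be ga : R) :
  mean P (fun x => al + be * h x + ga * h x ^+ 2) =
  al + be * mean P h + ga * mean P (fun x => h x ^+ 2).
Proof.
have ic : P.-integrable setT (EFin \o (fun _ : T => al)) by exact: finite_measure_integrable_cst.
have i1 : P.-integrable setT (EFin \o (fun x => be * h x)).
  have -> : (EFin \o (fun x => be * h x)) = (fun x => (be%:E * (EFin \o h) x)%E) by apply/funext => x; rewrite /= EFinM.
  by apply: integrableZl => //; exact: int1.
have i2 : P.-integrable setT (EFin \o (fun x => ga * h x ^+ 2)).
  have -> : (EFin \o (fun x => ga * h x ^+ 2)) = (fun x => (ga%:E * ((h x) ^+ 2)%:E)%E) by apply/funext => x; rewrite /= EFinM.
  by apply: integrableZl => //; exact: ih2.
rewrite !meanE RintegralD //; last first.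
  rewrite (_ : EFin \o _ = (EFin \o (fun _ : T => al)) \+ (EFin \o (fun x => be * h x))); last by apply/funext => x; rewrite /= EFinD.
  exact: integrableD.
rewrite RintegralD // RintegralZl //; last exact: int1.
rewrite RintegralZl // Rintegral_cst //.
have -> : fine (P setT%classic) = 1 by rewrite probability_setT.
by rewrite mulr1.
Qed.
End H.

Lemma alg_id (R : realFieldType) (c a b vP vQ g n : R) :
  0 < c < 1 -> 0 < ((1 - c) * vP + c * vQ) / (c * (1 - c)) ->
  let s := ((1 - c) * vP + c * vQ) / (c * (1 - c)) in
  let t := a - b in
  (1 - c) * ((1 - n) ^+ 2 + (- (2 * (1 - n) * g)) * a + g ^+ 2 * (vP + a ^+ 2))
  + c * (n ^+ 2 + 2 * n * g * b + g ^+ 2 * (vQ + b ^+ 2))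
  = (n - ((1 - c) * (1 - g * a) - c * g * b)) ^+ 2
    + c * (1 - c) * ((s + t ^+ 2) * (g - t / (s + t ^+ 2)) ^+ 2 + s / (s + t ^+ 2)).
Proof.
move=> /andP[c0 c1] s0 s t.
have hc : c != 0 by rewrite gt_eqF.
have hc1 : 1 - c != 0 by rewrite subr_eq0 eq_sym lt_eqF.
have hst : s + t ^+ 2 != 0.
  by rewrite gt_eqF //; move: s0; rewrite -/s => s0; have := sqr_ge0 t; lra.
rewrite /s /t in hst *.
field.
have cc : 0 < c * (1 - c) by rewrite mulr_gt0 // subr_gt0.
have S0 : 0 < (1 - c) * vP + c * vQ.
  have -> : (1 - c) * vP + c * vQ = ((1 - c) * vP + c * vQ) / (c * (1 - c)) * (c * (1 - c)) by field; rewrite ?hc ?hc1.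
  exact: mulr_gt0.
rewrite hc hc1 /= gt_eqF // ltr_pwDl // mulr_ge0 ?sqr_ge0 ?ltW //.
Qed.

Lemma mean_sq (R : realType) (d : measure_display) (T : measurableType d)
  (P : probability T R) (h : T -> R) :
  measurable_fun setT h ->
  P.-integrable setT (fun x => ((h x) ^+ 2)%:E) ->
  mean P (fun x => h x ^+ 2) = var P h + mean P h ^+ 2.
Proof.
move=> mh ih.
rewrite /var (_ : (fun x => (h x - mean P h) ^+ 2) =
  (fun x => mean P h ^+ 2 + (- (2 * mean P h)) * h x + 1 * h x ^+ 2)); last first.
  by apply/funext => x; ring.
rewrite mean_quad //.
have -> : mean P (fun x => h x ^+ 2) = mean P (fun x => 0 + 0 * h x + 1 * h x ^+ 2).
  by congr mean; apply/funext => x; ring.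
rewrite mean_quad //; ring.
Qed.

Theorem lemma1 (R : realType) (d : measure_display) (T : measurableType d)
  (P Q : probability T R) (c : R) (h : T -> R) :
  0 < c < 1 ->
  measurable_fun setT h ->
  P.-integrable setT (fun x => ((h x) ^+ 2)%:E) ->
  Q.-integrable setT (fun x => ((h x) ^+ 2)%:E) ->
  0 < sigma P Q c h ->
  (exists gn : R * R, forall g n : R,
      Lloss P Q c (fun x => gn.1 * h x + gn.2) <= Lloss P Q c (fun x => g * h x + n)) /\
  (forall gs ns : R,
      (forall g n : R,
        Lloss P Q c (fun x => gs * h x + ns) <= Lloss P Q c (fun x => g * h x + n)) ->
      Lloss P Q c (fun x => gs * h x + ns) = c * (1 - c) / (1 + SNR P Q c h ^+ 2)).
Proof.
move=> hc mh iP iQ hsig.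
have hs : 0 < sigma2 P Q c h by rewrite -sqrtr_gt0.
set a := mean P h; set b := mean Q h.
set s := sigma2 P Q c h; set t := tau P Q h.
have LE : forall g n, Lloss P Q c (fun x => g * h x + n) =
   (n - ((1 - c) * (1 - g * a) - c * g * b)) ^+ 2
    + c * (1 - c) * ((s + t ^+ 2) * (g - t / (s + t ^+ 2)) ^+ 2 + s / (s + t ^+ 2)).
  move=> g n.
  rewrite /Lloss (_ : (fun x => (1 - (g * h x + n)) ^+ 2) =
    (fun x => (1 - n) ^+ 2 + (- (2 * (1 - n) * g)) * h x + g ^+ 2 * h x ^+ 2)); last first.
    by apply/funext => x; ring.
  rewrite (_ : (fun x => (g * h x + n) ^+ 2) =
    (fun x => n ^+ 2 + (2 * n * g) * h x + g ^+ 2 * h x ^+ 2)); last first.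
    by apply/funext => x; ring.
  rewrite !mean_quad // !mean_sq //.
  exact: alg_id.
have c0 : 0 < c * (1 - c) by case/andP: hc => ? ?; rewrite mulr_gt0 // subr_gt0.
have st : 0 < s + t ^+ 2 by apply: (lt_le_trans hs); rewrite lerDl sqr_ge0.
set m := c * (1 - c) * (s / (s + t ^+ 2)).
have Lge : forall g n, m <= Lloss P Q c (fun x => g * h x + n).
  move=> g n; rewrite LE /m.
  set X := (n - _) ^+ 2; set Y := (_ * (g - _) ^+ 2); set Z := s / _.
  have X0 : 0 <= X by exact: sqr_ge0.
  have Y0 : 0 <= Y by rewrite /Y mulr_ge0 ?sqr_ge0 ?ltW.
  have := mulr_ge0 (ltW c0) Y0; lra.
set g0 := t / (s + t ^+ 2).
set n0 := (1 - c) * (1 - g0 * a) - c * g0 * b.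
have L0 : Lloss P Q c (fun x => g0 * h x + n0) = m.
  by rewrite LE /m -/g0 -/n0 !subrr expr0n /= mulr0 add0r mulrDr mulr0 add0r.
split.
  by exists (g0, n0) => g n /=; rewrite L0.
move=> gs ns Hmin.
have -> : Lloss P Q c (fun x => gs * h x + ns) = m.
  by apply/eqP; rewrite eq_le Lge andbT -L0 Hmin.
rewrite /m /SNR /sigma -/s -/t expr_div_n sqr_sqrtr ?ltW //.
have s0 : s != 0 by rewrite gt_eqF.
have st0 : s + t ^+ 2 != 0 by rewrite gt_eqF.
have e : 1 + t ^+ 2 / s = (s + t ^+ 2) / s by field.
rewrite e; field.
by rewrite s0 st0.
Qed.
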